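(* Let $\Gamma$ be an additive subgroup of $\mathbb{R}$ and let $\mu_1,\ldots,\mu_m\in\mathbb{R}$ be such that their classes in $\mathbb{R}/\langle\Gamma\rangle$ are $\mathbb{Q}$-linearly independent. Let $\Gamma'=\langle\Gamma\cup\{\mu_1,\ldots,\mu_m\}\rangle$, so that every $\alpha\in\Gamma'$ can be written uniquely as $\alpha=[\alpha]_\Gamma+\sum_{j=1}^m[\alpha]_{\mu_j}\mu_j$ with $[\alpha]_\Gamma\in\langle\Gamma\rangle$ and $[\alpha]_{\mu_j}\in\mathbb{Q}$. Then for every $j=1,\ldots,m$ there exists a derivation $\mathcal{D}_j$ of $\mathbb{C}((x^{\Gamma'}))$ (a $\mathbb{C}$-linear map satisfying the Leibniz rule) such that \[ \mathcal{D}_j\Big(\sum_{i\ge1}c_ix^{\alpha_i}\Big)=\sum_{i\ge1}c_i[\alpha_i]_{\mu_j}x^{\alpha_i}. \]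
   Context: $\Omega$ denotes the field of generalized power series $\sum_{i\ge1}c_i x^{\mu_i}$ with $c_i\in\mathbb{C}$, $\mu_i\in\mathbb{R}$ strictly increasing and tending to $\infty$ when there are infinitely many terms. For $E\subset\mathbb{R}$, $\langle E\rangle$ is the $\mathbb{Q}$-linear span of $E$ in $\mathbb{R}$. For an additive subgroup $G\subset\mathbb{R}$, $\mathbb{C}((x^{G}))\subset\Omega$ is the subfield of series whose support (set of exponents with non-zero coefficient) is contained in $G$. *)

(* Defs.v *)
From HB Require Import structures.
From mathcomp Require Import all_boot all_order all_algebra.
From mathcomp Require Import boolp classical_sets functions cardinality fsbigop reals.
From mathcomp Require Import complex.
Set Implicit Arguments. Unset Strict Implicit. Unset Printing Implicit Defensive.
Import Order.TTheory GRing.Theory Num.Theory.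
Local Open Scope classical_set_scope.
Local Open Scope ring_scope.

(* A (candidate) generalized power series sum c_a x^a is represented by its
   coefficient function c : R -> C (C = R[i]). *)
Notation gps R := (R -> R[i]) (only parsing).

(* Omega: the support is finite or a strictly increasing sequence tending to
   +oo; equivalently every part of the support bounded above is finite. *)
Definition in_Omega (R : realType) (f : R -> R[i]) : Prop :=
  forall M : R, finite_set [set a | f a != 0 /\ a <= M].

Definition supp_in (R : realType) (G : set R) (f : R -> R[i]) : Prop :=
  forall a, f a != 0 -> G a.

Definition CxG (R : realType) (G : set R) (f : R -> R[i]) : Prop :=
  in_Omega f /\ supp_in G f.

(* field operations of Omega (sum and scalar product pointwise; product is the
   Cauchy product, a finite sum for elements of Omega) *)
Definition gps_add (R : realType) (f g : R -> R[i]) : R -> R[i] :=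
  fun a => f a + g a.
Definition gps_scale (R : realType) (c : R[i]) (f : R -> R[i]) : R -> R[i] :=
  fun a => c * f a.
Definition gps_mul (R : realType) (f g : R -> R[i]) : R -> R[i] :=
  fun a => \sum_(b \in [set b | f b != 0 /\ g (a - b) != 0]) f b * g (a - b).

Definition qspan (R : realType) (E : set R) : set R :=
  [set x | exists (n : nat) (v : 'I_n -> R) (q : 'I_n -> rat),
      (forall i, E (v i)) /\ x = \sum_(i < n) ratr (q i) * v i].

Definition derivation_on (R : realType) (G : set R)
    (D : (R -> R[i]) -> (R -> R[i])) : Prop :=
  [/\ forall f, CxG G f -> CxG G (D f),
      forall f g, CxG G f -> CxG G g -> D (gps_add f g) = gps_add (D f) (D g),
      forall c f, CxG G f -> D (gps_scale c f) = gps_scale c (D f) &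
      forall f g, CxG G f -> CxG G g ->
        D (gps_mul f g) = gps_add (gps_mul (D f) g) (gps_mul f (D g))].

(* Main.v *)
Require Import Defs.
From HB Require Import structures.
From mathcomp Require Import all_boot all_order all_algebra.
From mathcomp Require Import boolp classical_sets functions cardinality fsbigop reals.
From mathcomp Require Import complex.
From mathcomp Require Import ring lra.
Import Order.TTheory GRing.Theory Num.Theory.
Local Open Scope classical_set_scope.
Local Open Scope ring_scope.

Section Aux.
Variable R : realType.

Lemma qspan0 (E : set R) : qspan E 0.
Proof. by exists 0%N, (fun i => 0), (fun i => 0); split; [case|rewrite big_ord0]. Qed.

Lemma qspan_in (E : set R) v : E v -> qspan E v.
Proof.
move=> Ev; exists 1%N, (fun _ => v), (fun _ => 1); split => //.
by rewrite big_ord1 rmorph1 mul1r.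
Qed.

Lemma qspanD (E : set R) x y : qspan E x -> qspan E y -> qspan E (x + y).
Proof.
move=> [n1 [v1 [q1 [Ev1 ->]]]] [n2 [v2 [q2 [Ev2 ->]]]].
exists (n1 + n2)%N,
  (fun i => match fintype.split (i : 'I_(n1 + n2)) with inl a => v1 a | inr b => v2 b end),
  (fun i => match fintype.split (i : 'I_(n1 + n2)) with inl a => q1 a | inr b => q2 b end).
split => [i|]; first by case: (fintype.split i).
rewrite big_split_ord /=; congr (_ + _); apply: eq_bigr => i _.
  by rewrite (unsplitK (inl _ i)).
by rewrite (unsplitK (inr _ i)).
Qed.

Lemma qspanZ (E : set R) r x : qspan E x -> qspan E (ratr r * x).
Proof.
move=> [n [v [q [Ev ->]]]]; exists n, v, (fun i => r * q i); split => //.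
rewrite mulr_sumr; apply: eq_bigr => i _; by rewrite rmorphM mulrA.
Qed.

Lemma qspanB (E : set R) x y : qspan E x -> qspan E y -> qspan E (x - y).
Proof.
move=> hx hy; apply: qspanD => //; have := @qspanZ E (-1) _ hy.
by rewrite rmorphN rmorph1 mulN1r.
Qed.

Lemma seq_lb (s : seq R) : exists L, forall x, x \in s -> L <= x.
Proof.
elim: s => [|y s [L HL]]; first by exists 0.
exists (Order.min y L) => x; rewrite inE => /orP [/eqP->|/HL h];
  rewrite ge_min ?lexx ?h ?orbT //.
Qed.

Lemma finite_lb (S : set R) : finite_set S -> exists L, forall x, S x -> L <= x.
Proof.
move/finite_fsetP => [B ->]; have [L HL] := seq_lb (finmap.enum_fset B).
by exists L => x /= /HL.
Qed.

Lemma omega_lb (g : R -> R[i]) : in_Omega g -> exists L, forall z, g z != 0 -> L <= z.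
Proof.
move=> /(_ 0) /finite_lb [L0 HL]; exists (Order.min L0 0) => z gz.
have [z0|z0] := leP z 0.
  by rewrite ge_min HL.
by rewrite ge_min (ltW z0) orbT.
Qed.

End Aux.
Section Dec.
Variable R : realType.
Variable Gamma : set R.
Variable m : nat.
Variable mu : 'I_m -> R.
Hypothesis indep : forall q : 'I_m -> rat,
      qspan Gamma (\sum_(k < m) ratr (q k) * mu k) -> forall k, q k = 0.

Definition dec (x g : R) (q : 'I_m -> rat) :=
  qspan Gamma g /\ x = g + \sum_(k < m) ratr (q k) * mu k.

Lemma dec_uniq x g1 q1 g2 q2 : dec x g1 q1 -> dec x g2 q2 -> forall k, q1 k = q2 k.
Proof.
move=> [h1 e1] [h2 e2] k; apply/eqP; rewrite -subr_eq0; apply/eqP.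
apply: (indep (fun k => q1 k - q2 k)).
have -> : \sum_(k < m) ratr (q1 k - q2 k) * mu k = g2 - g1.
  under eq_bigr do rewrite rmorphB mulrBl.
  by rewrite sumrB; move: e1 e2 => ->; lra.
exact: qspanB.
Qed.

Lemma dec_add x g1 q1 y g2 q2 : dec x g1 q1 -> dec y g2 q2 ->
  dec (x + y) (g1 + g2) (fun k => q1 k + q2 k).
Proof.
move=> [h1 ->] [h2 ->]; split; first exact: qspanD.
rewrite (_ : \sum_(k < m) ratr (q1 k + q2 k) * mu k =
  \sum_(k < m) ratr (q1 k) * mu k + \sum_(k < m) ratr (q2 k) * mu k).
  by ring.
by rewrite -big_split; apply: eq_bigr => k _; rewrite rmorphD mulrDl.
Qed.

Lemma dec_exists x : qspan (Gamma `|` range mu) x -> exists g q, dec x g q.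
Proof.
move=> [n [v [q [Ev ->]]]]; elim: n v q Ev => [|n IH] v q Ev.
  exists 0, (fun _ => 0); split; first exact: qspan0.
  by rewrite big_ord0 big1 ?addr0 // => i _; rewrite rmorph0 mul0r.
rewrite big_ord_recr /=.
have [g1 [q1 d1]] := IH (fun i => v (widen_ord (leqnSn n) i))
   (fun i => q (widen_ord (leqnSn n) i)) (fun i => Ev _).
suff [g2 [q2 d2]] : exists g q', dec (ratr (q ord_max) * v ord_max) g q'.
  by eexists; eexists; apply: dec_add d1 d2.
case: (Ev ord_max) => [Gv|[k _ <-]].
  exists (ratr (q ord_max) * v ord_max), (fun _ => 0); split.
    by apply: qspanZ; apply: qspan_in.
  by rewrite big1 ?addr0 // => i _; rewrite rmorph0 mul0r.
exists 0, (fun i => if i == k then q ord_max else 0); split; first exact: qspan0.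
rewrite add0r (bigD1 k) //= eqxx big1 ?addr0 // => i /negPf ->.
by rewrite rmorph0 mul0r.
Qed.

Variable j : 'I_m.

Definition cj (x : R) : rat :=
  match pselect (exists p : R * ('I_m -> rat), dec x p.1 p.2) with
  | left H => (sval (cid H)).2 j
  | right _ => 0
  end.

Lemma cjE x g q : dec x g q -> cj x = q j.
Proof.
move=> d; rewrite /cj; case: pselect => [H|H]; last first.
  by exfalso; apply: H; exists (g, q).
case: cid => [[g' q'] /= d']. by eapply dec_uniq; eassumption.
Qed.

End Dec.
Arguments dec_add {R Gamma m mu x g1 q1 y g2 q2}.
Arguments dec_exists {R Gamma m mu x}.
Arguments cjE {R Gamma m mu} indep {j x g q}.
Arguments cj {R} Gamma {m} mu j x.
Arguments omega_lb {R g}.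

Theorem lemma1 (R : realType) (Gamma : set R)
  (Gamma0 : Gamma 0)
  (GammaB : forall x y, Gamma x -> Gamma y -> Gamma (x - y))
  (m : nat) (mu : 'I_m -> R)
  (indep : forall q : 'I_m -> rat,
      qspan Gamma (\sum_(k < m) ratr (q k) * mu k) -> forall k, q k = 0) :
  let Gamma' := qspan (Gamma `|` range mu) in
  forall j : 'I_m,
  exists D : (R -> R[i]) -> (R -> R[i]),
    derivation_on Gamma' D /\
    forall f, CxG Gamma' f ->
      forall (alpha g : R) (q : 'I_m -> rat),
        qspan Gamma g -> alpha = g + \sum_(k < m) ratr (q k) * mu k ->
        D f alpha = ratr (q j) * f alpha.
Proof.
move=> Gamma' j.
exists (fun f a => (ratr (cj Gamma mu j a) : R[i]) * f a).
split; last first.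
  move=> f _ alpha g q hg ->.
  by rewrite (cjE indep (conj hg erefl)).
have nz : forall (c : R[i]) (z : R[i]), c * z != 0 -> z != 0.
  by move=> c z; apply: contraNneq => ->; rewrite mulr0.
split.
- move=> f [fO fS]; split.
    move=> M; apply: sub_finite_set (fO M) => a [/= h ha]; split => //.
    exact: nz h.
  by move=> a h; apply: fS; exact: nz h.
- by move=> f g _ _; apply/funext => a; rewrite /gps_add mulrDr.
- by move=> c f _; apply/funext => a; rewrite /gps_scale mulrCA.
move=> f g [fO fS] [gO gS]; apply/funext => a; rewrite /gps_add /gps_mul.
set A := [set b | f b != 0 /\ g (a - b) != 0].
have Afin : finite_set A.
  have [L HL] := omega_lb gO.
  apply: sub_finite_set (fO (a - L)) => b [fb gb]; split => //.
  have := HL _ gb; lra.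
rewrite [X in _ = X + _](fsbig_widen _ A); last 2 first.
- by move=> b [h gb]; split => //; exact: nz h.
- move=> b [[fb gb] nh]; rewrite /preimage /=; apply/eqP.
  rewrite mulf_eq0; apply/orP; left; apply/negPn/negP => h; exact: nh (conj h gb).
rewrite [X in _ = _ + X](fsbig_widen _ A); last 2 first.
- by move=> b [fb h]; split => //; exact: nz h.
- move=> b [[fb gb] nh]; rewrite /preimage /=; apply/eqP.
  rewrite mulf_eq0; apply/orP; right; apply/negPn/negP => h; exact: nh (conj fb h).
rewrite -fsbig_split // mulr_fsumr; apply: eq_fsbigr => b; rewrite inE => -[fb gb].
have [g1 [q1 d1]] := dec_exists (fS _ fb).
have [g2 [q2 d2]] := dec_exists (gS _ gb).
have d := dec_add d1 d2.
rewrite (_ : b + (a - b) = a) in d; last by ring.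
rewrite (cjE indep d) (cjE indep d1) (cjE indep d2) rmorphD /=; ring.
Qed.
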